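(* Let $M\subset E^2$ be a centrally symmetric convex body with center of symmetry $o$. For every triangle $\Delta$ inscribed in $M$ (i.e. with all vertices in the boundary of $M$) whose centroid is $o$, we have $M\subset 3\Delta$, where $3\Delta$ denotes the image of $\Delta$ under the homothety with center $o$ and ratio $3$.
   Context: A convex body is a compact convex set with nonempty interior. The centroid of a triangle is the average of its three vertices. *)

(* Defs.v *)
From HB Require Import structures.
From mathcomp Require Import all_boot all_order all_algebra.
From mathcomp Require Import all_classical all_reals all_analysis.
Set Implicit Arguments. Unset Strict Implicit. Unset Printing Implicit Defensive.
Import Order.TTheory GRing.Theory Num.Theory.
Import numFieldNormedType.Exports.
Local Open Scope classical_set_scope.
Local Open Scope ring_scope.

Notation plane R := 'rV[R]_2.

Definition convex_body (R : realType) (M : set (plane R)) : Prop :=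
  compact M /\ convex_set (M : set (convex_lmodType (plane R))) /\
  interior M !=set0.

Definition centrally_symmetric (R : realType) (M : set (plane R)) (o : plane R) :=
  forall x, M x -> M (o *+ 2 - x).

Definition bd (R : realType) (M : set (plane R)) : set (plane R) :=
  closure M `\` interior M.

Definition noncollinear (R : realType) (a b c : plane R) : Prop :=
  \det (col_mx (b - a) (c - a)) != 0.

Definition triangle (R : realType) (a b c : plane R) : set (plane R) :=
  [set x | exists l1 l2 l3 : R, [/\ 0 <= l1, 0 <= l2, 0 <= l3,
     l1 + l2 + l3 = 1 & x = l1 *: a + l2 *: b + l3 *: c]].

Definition homothety (R : realType) (o : plane R) (k : R) (S : set (plane R)) :=
  [set o + k *: (x - o) | x in S].

(* Main.v *)
Require Import Defs.
From HB Require Import structures.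
From mathcomp Require Import all_boot all_order all_algebra.
From mathcomp Require Import all_classical all_reals all_analysis.
From mathcomp Require Import ring lra.
Import Order.TTheory GRing.Theory Num.Theory.
Import numFieldNormedType.Exports.
Local Open Scope classical_set_scope.
Local Open Scope ring_scope.
Set Implicit Arguments.

Lemma det2 (R : realType) (A : 'M[R]_2) : \det A = A 0 0 * A 1 1 - A 0 1 * A 1 0.
Proof.
rewrite (expand_det_row _ 0) !big_ord_recr big_ord0 /= add0r.
rewrite /cofactor !det_mx11 /= !mxE /=.
have -> : lift 0 0 = 1 :> 'I_2 by apply/val_inj.
have -> : lift (widen_ord (leqnSn 1) ord_max) 0 = 1 :> 'I_2 by apply/val_inj.
have -> : widen_ord (leqnSn 1) ord_max = 0 :> 'I_2 by apply/val_inj.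
have -> : lift ord_max 0 = 0 :> 'I_2 by apply/val_inj.
rewrite expr0 expr1. 
have -> : (ord_max : 'I_2) = 1 by apply/val_inj.
rewrite mul1r; ring.
Qed.
Lemma det22 (R : realType) (u v : 'rV[R]_2) : \det (col_mx u v) = u 0 0 * v 0 1 - u 0 1 * v 0 0.
Proof.
rewrite det2.
have e0 : forall j, col_mx u v 0 j = u 0 j.
  by move=> j; rewrite -(col_mxEu u v 0 j); congr (fun i => col_mx u v i j); apply/val_inj.
have e1 : forall j, col_mx u v 1 j = v 0 j.
  by move=> j; rewrite -(col_mxEd u v 0 j); congr (fun i => col_mx u v i j); apply/val_inj.
by rewrite !e0 !e1.
Qed.

Definition dt (R : realType) (u v : 'rV[R]_2) := u 0 0 * v 0 1 - u 0 1 * v 0 0.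
Arguments dt {R}.

Lemma conv2 (R : realType) (M : set 'rV[R]_2) x y t :
  convex_set (M : set (convex_lmodType (plane R))) -> M x -> M y -> 0 <= t -> t <= 1 ->
  M (t *: x + (1 - t) *: y).
Proof.
move=> cM Mx My t0 t1.
have := cM x y (Itv01 t0 t1) (mem_set Mx) (mem_set My).
move/set_mem. by [].
Qed.

Lemma conv3 (R : realType) (M : set 'rV[R]_2) P Q S m1 m2 m3 :
  convex_set (M : set (convex_lmodType (plane R))) -> M P -> M Q -> M S ->
  0 <= m1 -> 0 <= m2 -> 0 <= m3 -> m1 + m2 + m3 = 1 ->
  M (m1 *: P + m2 *: Q + m3 *: S).
Proof.
move=> cM MP MQ MS h1 h2 h3 hs.
have [e1|ne1] := eqVneq m1 1.
  have -> : m1 *: P + m2 *: Q + m3 *: S = P.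
    apply/rowP => j; rewrite !mxE.
    have -> : m2 = 0 by lra.
    have -> : m3 = 0 by lra.
    rewrite e1; ring.
  by [].
have pos : 0 < 1 - m1.
  rewrite subr_gt0 lt_neqAle. apply/andP; split; last lra. exact: ne1.
set t := m2 / (1 - m1).
have t0 : 0 <= t by rewrite /t divr_ge0 // ltW.
have t1 : t <= 1 by rewrite /t ler_pdivrMr // mul1r; lra.
have MY := @conv2 _ _ _ _ _ cM MQ MS t0 t1.
have m10 : 0 <= m1 by [].
have m11 : m1 <= 1 by lra.
have := @conv2 _ _ _ _ _ cM MP MY m10 m11.
have -> : m1 *: P + (1 - m1) *: (t *: Q + (1 - t) *: S) = m1 *: P + m2 *: Q + m3 *: S.
  apply/rowP => j; rewrite !mxE /t.
  have hm3 : m3 = 1 - m1 - m2 by lra.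
  rewrite hm3; field; lra.
by [].
Qed.

Lemma mxn (R : realType) (v : 'rV[R]_2) i : `|v 0 i| <= `|v|.
Proof.
rewrite [X in _ <= X]/Num.norm /= mx_normrE.
apply: (le_trans _ (le_bigmax _ _ (0, i))) => //.
Qed.

Lemma interior3 (R : realType) (M : set 'rV[R]_2) P Q S z (l1 l2 l3 : R) :
  convex_set (M : set (convex_lmodType (plane R))) -> M P -> M Q -> M S ->
  0 < l1 -> 0 < l2 -> 0 < l3 -> l1 + l2 + l3 = 1 ->
  z = l1 *: P + l2 *: Q + l3 *: S ->
  dt (Q - P) (S - P) != 0 -> interior M z.
Proof.
move=> cM MP MQ MS h1 h2 h3 hs ->{z} hD.
set d1 := Q - P; set d2 := S - P; set D := dt d1 d2.
set m := Num.min l1 (Num.min l2 l3).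
have m1 : m <= l1 by rewrite /m ge_min lexx.
have m2 : m <= l2 by rewrite /m ge_min ge_min lexx orbT.
have m3 : m <= l3 by rewrite /m ge_min ge_min lexx !orbT.
have m0 : 0 < m by rewrite /m !lt_min h1 h2 h3.
set K := `|d1 0 0| + `|d1 0 1| + `|d2 0 0| + `|d2 0 1| + 1.
have K0 : 0 < K by rewrite /K; have := normr_ge0 (d1 0 0); have := normr_ge0 (d1 0 1);
  have := normr_ge0 (d2 0 0); have := normr_ge0 (d2 0 1); lra.
have D0 : 0 < `|D| by rewrite normr_gt0.
set e := m * `|D| / (2 * K).
have e0 : 0 < e by rewrite /e divr_gt0 // ?mulr_gt0 //.
rewrite /interior. rewrite -nbhs_nbhs_norm.
exists e => // y /= hy.
set z := l1 *: P + l2 *: Q + l3 *: S in hy.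
have hw : forall i, `|y 0 i - z 0 i| <= e.
  move=> i; apply: ltW; apply: le_lt_trans hy.
  rewrite distrC.
  have -> : z 0 i - y 0 i = (z - y) 0 i by rewrite [RHS]mxE [(- y) 0 i]mxE.
  exact: mxn.
set w0 := y 0 0 - z 0 0; set w1 := y 0 1 - z 0 1.
have hw0 := hw 0; have hw1 := hw 1; rewrite -/w0 in hw0; rewrite -/w1 in hw1.
set a := (w0 * d2 0 1 - w1 * d2 0 0) / D.
set b := (d1 0 0 * w1 - d1 0 1 * w0) / D.
have bnd : forall u v : R, `|u| + `|v| + 1 <= K ->
    `|(w0 * v - w1 * u) / D| <= m / 2.
  move=> u v hK.
  rewrite normrM normfV ler_pdivrMr //.
  have h1' : `|w0 * v - w1 * u| <= `|w0| * `|v| + `|w1| * `|u|.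
    by rewrite -!normrM; apply: ler_normB.
  have : `|w0| * `|v| <= e * `|v| by apply: ler_wpM2r.
  have : `|w1| * `|u| <= e * `|u| by apply: ler_wpM2r.
  have : e * (`|u| + `|v|) <= e * K by apply: ler_wpM2l; [exact: ltW | lra].
  have -> : m / 2 * `|D| = e * K by rewrite /e; field; lra.
  lra.
have ha : `|a| <= m / 2.
  rewrite /a; apply: bnd. rewrite /K; have := normr_ge0 (d1 0 0); have := normr_ge0 (d1 0 1); lra.
have hb : `|b| <= m / 2.
  rewrite /b.
  have -> : d1 0 0 * w1 - d1 0 1 * w0 = w0 * (- d1 0 1) - w1 * (- d1 0 0) by ring.
  apply: bnd; rewrite !normrN /K; have := normr_ge0 (d2 0 0); have := normr_ge0 (d2 0 1); lra.
move: ha hb; rewrite !ler_norml => /andP[ha1 ha2] /andP[hb1 hb2].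
have -> : y = (l1 - a - b) *: P + (l2 + a) *: Q + (l3 + b) *: S.
  have hD' : D != 0 by [].
  have ew0 : w0 = a * d1 0 0 + b * d2 0 0.
    rewrite /a /b; move: hD'; rewrite /D /dt => hD'; field; exact hD'.
  have ew1 : w1 = a * d1 0 1 + b * d2 0 1.
    rewrite /a /b; move: hD'; rewrite /D /dt => hD'; field; exact hD'.
  move: ew0 ew1; rewrite /w0 /w1 /d1 /d2 /z !mxE => ew0 ew1.
  apply/rowP => j; rewrite !mxE.
  have [->|->] : j = 0 \/ j = 1.
    case: j => [[|[|j]] Hj]; [left|right|by []]; exact/val_inj.
  - have -> : y 0 0 = (y 0 0 - (l1 * P 0 0 + l2 * Q 0 0 + l3 * S 0 0)) + (l1 * P 0 0 + l2 * Q 0 0 + l3 * S 0 0) by ring.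
    rewrite ew0; ring.
  - have -> : y 0 1 = (y 0 1 - (l1 * P 0 1 + l2 * Q 0 1 + l3 * S 0 1)) + (l1 * P 0 1 + l2 * Q 0 1 + l3 * S 0 1) by ring.
    rewrite ew1; ring.
apply: conv3 => //; lra.
Qed.

Lemma dt_lin (R : realType) (u v : 'rV[R]_2) p q r s :
  dt (p *: u + q *: v) (r *: u + s *: v) = (p * s - q * r) * dt u v.
Proof. rewrite /dt !mxE; ring. Qed.

Lemma key (R : realType) (M : set 'rV[R]_2) (o u v : 'rV[R]_2) (al be : R) :
  convex_set (M : set (convex_lmodType (plane R))) ->
  (forall p, M (o + p) -> M (o - p)) ->
  M (o + u) -> M (o + v) -> M (o - u - v) ->
  ~ interior M (o + u) -> ~ interior M (o + v) -> ~ interior M (o - u - v) ->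
  dt u v != 0 ->
  M (o + (al *: u + be *: v)) -> 2 * al - be <= 3.
Proof.
move=> cM sym Ma Mb Mc ia ib ic hD MX.
have MX' := sym _ MX.
have Mna : M (o - u) by apply: sym.
have Mnb : M (o - v) by apply: sym.
have Mnc : M (o + (u + v)).
  have -> : o + (u + v) = o - (- u - v) by apply/rowP => j; rewrite !mxE; ring.
  apply: sym; by have -> : o + (- u - v) = o - u - v by apply/rowP => j; rewrite !mxE; ring.
rewrite leNgt; apply/negP => H.
have [a1|a1] := lerP al 1.
  apply: ib.
  set T := al - 2 * be - 1.
  have T0 : 0 < T by rewrite /T; lra.
  apply: (@interior3 _ M (o - u) (o + (u + v)) (o - (al *: u + be *: v))
     _ ((- be - 1) / T) ((al - be - 1) / T) (1 / T)) => //.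
  - apply: divr_gt0 => //; lra.
  - apply: divr_gt0 => //; lra.
  - apply: divr_gt0 => //; lra.
  - rewrite /T; field; lra.
  - apply/rowP => j; rewrite !mxE /T; field; lra.
  - have -> : o + (u + v) - (o - u) = 2 *: u + 1 *: v by apply/rowP => j; rewrite !mxE; ring.
    have -> : o - (al *: u + be *: v) - (o - u) = (1 - al) *: u + (- be) *: v by apply/rowP => j; rewrite !mxE; ring.
    rewrite dt_lin mulf_neq0 //; apply/negP => /eqP hh; lra.
have [ab|ab] := lerP (al - be) 1.
  apply: ic.
  set T := al + be - 1.
  have T0 : 0 < T by rewrite /T; lra.
  apply: (@interior3 _ M (o - u) (o - v) (o - (al *: u + be *: v))
     _ ((be - 1) / T) ((al - 1) / T) (1 / T)) => //.
  - apply: divr_gt0 => //; lra.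
  - apply: divr_gt0 => //; lra.
  - apply: divr_gt0 => //; lra.
  - rewrite /T; field; lra.
  - apply/rowP => j; rewrite !mxE /T; field; lra.
  - have -> : o - v - (o - u) = 1 *: u + (-1) *: v by apply/rowP => j; rewrite !mxE; ring.
    have -> : o - (al *: u + be *: v) - (o - u) = (1 - al) *: u + (- be) *: v by apply/rowP => j; rewrite !mxE; ring.
    rewrite dt_lin mulf_neq0 //; apply/negP => /eqP hh; lra.
apply: ia.
set T := 2 * al - be - 1.
have T0 : 0 < T by rewrite /T; lra.
apply: (@interior3 _ M (o - v) (o + (u + v)) (o + (al *: u + be *: v))
   _ ((al - 1) / T) ((al - be - 1) / T) (1 / T)) => //.
- apply: divr_gt0 => //; lra.
- apply: divr_gt0 => //; lra.
- apply: divr_gt0 => //; lra.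
- rewrite /T; field; lra.
- apply/rowP => j; rewrite !mxE /T; field; lra.
- have -> : o + (u + v) - (o - v) = 1 *: u + 2 *: v by apply/rowP => j; rewrite !mxE; ring.
  have -> : o + (al *: u + be *: v) - (o - v) = al *: u + (be + 1) *: v by apply/rowP => j; rewrite !mxE; ring.
  rewrite dt_lin mulf_neq0 //; apply/negP => /eqP hh; lra.
Qed.

Unset Implicit Arguments.

Theorem mainTheorem2 (R : realType) (M : set 'rV[R]_2) (o : 'rV[R]_2)
  (a b c : 'rV[R]_2) :
  convex_body M -> centrally_symmetric M o ->
  noncollinear a b c ->
  bd M a -> bd M b -> bd M c ->
  3^-1 *: (a + b + c) = o ->
  M `<=` homothety o 3 (triangle a b c).
Proof.
move=> [cpt [cM _]] csym hnc [cla ia] [clb ib] [clc ic] ho x Mx.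
have clM : closed M := compact_closed (@norm_hausdorff _ _) cpt.
have eM : M = closure M := (closure_id M).1 clM.
have Ma : M a by rewrite eM.
have Mb : M b by rewrite eM.
have Mc : M c by rewrite eM.
have hoj : forall j, o 0 j = (a 0 j + b 0 j + c 0 j) / 3.
  by move=> j; rewrite -ho !mxE; field.
set u := a - o; set v := b - o.
have ea : o + u = a by apply/rowP => j; rewrite !mxE; ring.
have eb : o + v = b by apply/rowP => j; rewrite !mxE; ring.
have ec : o - u - v = c by apply/rowP => j; rewrite !mxE hoj; field.
have sym : forall p, M (o + p) -> M (o - p).
  move=> p /csym; have -> : o *+ 2 - (o + p) = o - p by apply/rowP => j; rewrite !mxE; ring.
  by [].
have hD : dt u v != 0.
  apply/negP => /eqP h0; move: hnc; rewrite /noncollinear det22.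
  have -> : b - a = (-1) *: u + 1 *: v by apply/rowP => j; rewrite !mxE; ring.
  have -> : c - a = (-2) *: u + (-1) *: v by apply/rowP => j; rewrite !mxE hoj; field.
  have := @dt_lin _ u v (-1) 1 (-2) (-1); rewrite /dt => ->; rewrite /dt in h0; rewrite h0 mulr0.
  by rewrite eqxx.
set w := x - o.
set al := dt w v / dt u v.
set be := dt u w / dt u v.
have ex : x = o + (al *: u + be *: v).
  apply/rowP => j; rewrite !mxE.
  have [->|->] : j = 0 \/ j = 1.
    case: j => [[|[|j]] Hj]; [left|right|by []]; exact/val_inj.
  - move: hD; rewrite /al /be /dt /w !mxE => hD; field; exact: hD.
  - move: hD; rewrite /al /be /dt /w !mxE => hD; field; exact: hD.
have Mx' : M (o - (al *: u + be *: v)) by apply: sym; rewrite -ex.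
rewrite -ea in Ma ia; rewrite -eb in Mb ib; rewrite -ec in Mc ic.
have K1 : 2 * (- al) - (- be) <= 3.
  apply: (@key _ M o u v) => //.
  have -> : o + (- al *: u + - be *: v) = o - (al *: u + be *: v)
    by apply/rowP => j; rewrite !mxE; ring.
  by [].
have evu : o - v - u = o - u - v by apply/rowP => j; rewrite !mxE; ring.
have hD2 : dt v u != 0.
  move: hD; rewrite /dt => hD; apply/negP => /eqP h; move/negP: hD; apply; apply/eqP; lra.
have K2 : 2 * (- be) - (- al) <= 3.
  apply: (@key _ M o v u (- be) (- al) cM sym Mb Ma); rewrite ?evu //.
  have -> : o + (- be *: v + - al *: u) = o - (al *: u + be *: v)
    by apply/rowP => j; rewrite !mxE; ring.
  by [].
have e1 : o + (- u - v) = o - u - v by apply/rowP => j; rewrite !mxE; ring.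
have e2 : o - (- u - v) - u = o + v by apply/rowP => j; rewrite !mxE; ring.
have hD3 : dt (- u - v) u != 0.
  move: hD; rewrite /dt !mxE => hD; apply/negP => /eqP h; move/negP: hD; apply; apply/eqP; lra.
have K3 : 2 * be - (be - al) <= 3.
  apply: (@key _ M o (- u - v) u be (be - al) cM sym); rewrite ?e1 ?e2 //.
  have -> : o + (be *: (- u - v) + (be - al) *: u) = o - (al *: u + be *: v)
    by apply/rowP => j; rewrite !mxE; ring.
  by [].
set l1 := (2 * al - be + 3) / 9.
set l2 := (2 * be - al + 3) / 9.
set l3 := (3 - al - be) / 9.
exists (l1 *: a + l2 *: b + l3 *: c).
  exists l1, l2, l3; split; [rewrite /l1; lra|rewrite /l2; lra|rewrite /l3; lra|rewrite /l1 /l2 /l3; lra|by []].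
rewrite ex -ea -eb -ec; apply/rowP => j; rewrite !mxE /l1 /l2 /l3; by field.
Qed.
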